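(* Let $P_S,H_{SR},H_{SD},H_{RD},\sigma_a^2,\sigma_b^2>0$, $\eta\in(0,1]$, assume $\sigma_R^2=\sigma_D^2=\sigma_a^2+\sigma_b^2$ and $H_{SR}>H_{SD}$, and let $\rho^{\mathrm{th}}=1-\frac{H_{SD}\sigma_b^2}{H_{SR}\sigma_D^2-H_{SD}\sigma_a^2}$. Fix $\rho\in(0,\rho^{\mathrm{th}})$ and set $C^{(PS)}_{SR}=\log\big(1+\frac{(1-\rho)P_SH_{SR}}{(1-\rho)\sigma_a^2+\sigma_b^2}\big)$, $b=C_{SD}=\log(1+P_SH_{SD}/\sigma_D^2)$, $a'=C^{(PS)}_{SR}-C_{SD}$, $c'=\eta\rho H_{SR}H_{RD}P_S/\sigma_D^2$. Then the problem $$\max_{\lambda\in(0,1)}\min\Big\{\lambda C^{(PS)}_{SR},\ \lambda b+(1-\lambda)\Big(b+\log\Big(1+\frac{c'\lambda}{1-\lambda}\Big)\Big)\Big\}$$ is solved by $\lambda^*=\max\{\lambda_1,\lambda_2\}$, where $$\lambda_1=\frac{-\frac{1}{a'}\mathcal W_{-1}\!\big(-\frac{a'}{c'}e^{-b-\frac{a'}{c'}}\big)-\frac1{c'}}{1-\frac{1}{a'}\mathcal W_{-1}\!\big(-\frac{a'}{c'}e^{-b-\frac{a'}{c'}}\big)-\frac1{c'}},\qquad \lambda_2=\frac{e^{\mathcal W_0(\frac{c'-1}{e})+1}-1}{e^{\mathcal W_0(\frac{c'-1}{e})+1}+c'-1}.$$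
   Context: $\log$ is the natural logarithm; $\mathcal W_0,\mathcal W_{-1}$ are the principal and lower real branches of the Lambert W function. This is the power-splitting (PS) relay protocol with mutual-information accumulation at the destination for a fixed power-splitting ratio $\rho$ (fraction of received power used for energy harvesting), with relay forwarding power $\eta\rho H_{SR}P_S\lambda/(1-\lambda)$; $\lambda$ is the broadcast time fraction. $\sigma_a^2,\sigma_b^2$ are antenna and signal-processing noise powers at the relay. *)

(* Defs.v *)
From Stdlib Require Import Reals ClassicalEpsilon.
Open Scope R_scope.

(* Real branches of the Lambert W function, defined as in the literature:
   W0 x  is the solution w >= -1 of w e^w = x   (x >= -1/e),
   Wm1 x is the solution w <= -1 of w e^w = x   (-1/e <= x < 0).
   Outside the domain the value is an unspecified real (Hilbert choice). *)
Definition LambertW0 (x : R) : R :=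
  epsilon (inhabits 0) (fun w => -1 <= w /\ w * exp w = x).
Definition LambertWm1 (x : R) : R :=
  epsilon (inhabits 0) (fun w => w <= -1 /\ w * exp w = x).

Definition ps_objective (CSR b c' lam : R) : R :=
  Rmin (lam * CSR)
       (lam * b + (1 - lam) * (b + ln (1 + c' * lam / (1 - lam)))).

(* Main.v *)
Require Import Defs.
From Stdlib Require Import Reals Lra Psatz ClassicalEpsilon.
Open Scope R_scope.
Lemma ln_tan x y : 0 < x -> 0 < y -> ln y <= ln x + (y - x) / x.
Proof.
  intros hx hy.
  pose proof (exp_ineq1_le (ln (y / x))) as h.
  rewrite exp_ln in h by (apply Rdiv_lt_0_compat; lra).
  unfold Rdiv in h. rewrite ln_mult in h by (try apply Rinv_0_lt_compat; lra).
  rewrite ln_Rinv in h by lra.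
  replace ((y - x) / x) with (y * / x - 1) by (field; lra). lra.
Qed.

Lemma div_le_cross x y p q : 0 < p -> 0 < q -> x * q <= y * p -> x / p <= y / q.
Proof.
  intros hp hq h.
  apply (Rmult_le_reg_r (p * q)); [nra|].
  replace (x / p * (p * q)) with (x * q) by (field; lra).
  replace (y / q * (p * q)) with (y * p) by (field; lra). lra.
Qed.

Lemma div_lt_cross x y p q : 0 < p -> 0 < q -> x * q < y * p -> x / p < y / q.
Proof.
  intros hp hq h.
  apply (Rmult_lt_reg_r (p * q)); [nra|].
  replace (x / p * (p * q)) with (x * q) by (field; lra).
  replace (y / q * (p * q)) with (y * p) by (field; lra). lra.
Qed.

Lemma W0_exists z : - exp (-1) <= z -> exists w, -1 <= w /\ w * exp w = z.
Proof.
  intros hz.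
  set (Y := Rabs z + 1).
  assert (hY : 0 < Y) by (unfold Y; pose proof (Rabs_pos z); lra).
  assert (hzY : z <= Y) by (unfold Y; pose proof (Rle_abs z); lra).
  assert (heY : 1 <= exp Y) by (pose proof (exp_ineq1_le Y); lra).
  destruct (IVT_cor (fun w => w * exp w - z) (-1) Y) as [w [hw1 hw2]].
  - reg.
  - lra.
  - assert (h1 : -1 * exp (-1) - z <= 0) by lra.
    assert (h2 : 0 <= Y * exp Y - z) by nra.
    nra.
  - exists w. split; lra.
Qed.

Lemma Wm1_exists z : - exp (-1) <= z < 0 -> exists w, w <= -1 /\ w * exp w = z.
Proof.
  intros [hz1 hz2].
  set (n := - z).
  set (y := 4 / n + 1).
  assert (hn : 0 < n) by (unfold n; lra).
  assert (hny : n * y = 4 + n) by (unfold y; field; lra).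
  assert (hy : 1 <= y) by (unfold y; assert (0 < 4 / n) by (apply Rdiv_lt_0_compat; lra); lra).
  set (s := exp y).
  assert (hs : (1 + y / 2) * (1 + y / 2) <= s).
  { unfold s. replace y with (y / 2 + y / 2) at 3 by field.
    rewrite exp_plus. pose proof (exp_ineq1_le (y / 2)). nra. }
  assert (hys : y <= n * s) by nra.
  assert (hspos : 0 < s) by (unfold s; apply exp_pos).
  destruct (IVT_cor (fun w => w * exp w - z) (- y) (-1)) as [w [hw1 hw2]].
  - reg.
  - lra.
  - assert (h1 : -1 * exp (-1) - z <= 0) by lra.
    assert (h2 : 0 <= - y * exp (- y) - z).
    { rewrite exp_Ropp. fold s.
      assert (y * / s <= n).
      { apply (Rmult_le_reg_r s); [lra|]. rewrite Rmult_assoc, Rinv_l; lra. }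
      unfold n in *. lra. }
    nra.
  - exists w. split; lra.
Qed.

Lemma obj_u C b c' u : 0 < c' -> 1 <= u ->
  ps_objective C b c' ((u - 1) / (u - 1 + c')) =
  Rmin (C * ((u - 1) / (u - 1 + c'))) (b + c' * ln u / (u - 1 + c')).
Proof.
  intros hc hu. unfold ps_objective. f_equal; [ring|].
  replace (1 + c' * ((u - 1) / (u - 1 + c')) / (1 - (u - 1) / (u - 1 + c'))) with u
    by (field; lra).
  field; lra.
Qed.

Lemma lam_u c' l : 0 < c' -> 0 < l < 1 ->
  l = ((1 + c' * l / (1 - l)) - 1) / ((1 + c' * l / (1 - l)) - 1 + c').
Proof. intros. field. split; nra. Qed.

Lemma g_mono c' u u' : 0 < c' -> 1 <= u <= u' ->
  (u - 1) / (u - 1 + c') <= (u' - 1) / (u' - 1 + c').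
Proof. intros. apply div_le_cross; nra. Qed.

Lemma lam_in c' u : 0 < c' -> 1 < u -> 0 < (u - 1) / (u - 1 + c') < 1.
Proof. intros. split. apply Rdiv_lt_0_compat; lra.
  apply Rmult_lt_reg_r with (u - 1 + c'); [lra|]. unfold Rdiv. rewrite Rmult_assoc, Rinv_l; lra. Qed.

Theorem corollary1
  (PS HSR HSD HRD sa2 sb2 sD2 eta rho : R)
  (hPS : 0 < PS) (hHSR : 0 < HSR) (hHSD : 0 < HSD) (hHRD : 0 < HRD)
  (hsa : 0 < sa2) (hsb : 0 < sb2)
  (heta : 0 < eta <= 1)
  (hsD : sD2 = sa2 + sb2)
  (hH : HSR > HSD)
  (hrho : 0 < rho < 1 - HSD * sb2 / (HSR * sD2 - HSD * sa2)) :
  let CSR := ln (1 + (1 - rho) * PS * HSR / ((1 - rho) * sa2 + sb2)) in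
  let b := ln (1 + PS * HSD / sD2) in
  let a' := CSR - b in
  let c' := eta * rho * HSR * HRD * PS / sD2 in
  let Wm := LambertWm1 (- (a' / c') * exp (- b - a' / c')) in
  let lam1 := (- (1 / a') * Wm - 1 / c') / (1 - (1 / a') * Wm - 1 / c') in
  let E := exp (LambertW0 ((c' - 1) / exp 1) + 1) in
  let lam2 := (E - 1) / (E + c' - 1) in
  let lamstar := Rmax lam1 lam2 in
  0 < lamstar < 1 /\
  (forall lam, 0 < lam < 1 ->
     ps_objective CSR b c' lam <= ps_objective CSR b c' lamstar).
Proof.
  intros CSR b a' c' Wm lam1 E lam2 lamstar.
  assert (hsD2 : 0 < sD2) by lra.
  assert (hD : 0 < HSR * sD2 - HSD * sa2) by (rewrite hsD; nra).
  set (D := HSR * sD2 - HSD * sa2) in *.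
  set (q := HSD * sb2 / D) in *.
  assert (hq : q * D = HSD * sb2) by (unfold q; field; lra).
  assert (hq0 : 0 < q) by (unfold q; apply Rdiv_lt_0_compat; nra).
  assert (hkey : HSD * sb2 < (1 - rho) * D) by nra.
  assert (h1r : 0 < 1 - rho) by lra.
  assert (hb : 0 < b).
  { unfold b. rewrite <- ln_1. apply ln_increasing; [lra|].
    assert (0 < PS * HSD / sD2) by (apply Rdiv_lt_0_compat; nra). lra. }
  assert (hCb : b < CSR).
  { unfold CSR, b. apply ln_increasing.
    - assert (0 < PS * HSD / sD2) by (apply Rdiv_lt_0_compat; nra). lra.
    - apply Rplus_lt_compat_l. apply div_lt_cross; [lra|nra|].
      unfold D in hkey. nra. }
  assert (ha : 0 < a') by (unfold a'; lra).
  assert (hc : 0 < c').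
  { unfold c'. apply Rdiv_lt_0_compat; [|lra].
    repeat apply Rmult_lt_0_compat; lra. }
  assert (hC : CSR = a' + b) by (unfold a'; ring).
  clearbody CSR b a' c'.
  set (x := a' / c') in *.
  assert (hx : 0 < x) by (unfold x; apply Rdiv_lt_0_compat; lra).
  assert (HW : Wm <= -1 /\ Wm * exp Wm = - x * exp (- b - x)).
  { unfold Wm, LambertWm1. apply epsilon_spec. apply Wm1_exists.
    assert (he : exp (- b - x) = exp (- b) * exp (- x))
      by (rewrite <- exp_plus; f_equal; ring).
    assert (hb1 : exp (- b) < 1) by (rewrite <- exp_0; apply exp_increasing; lra).
    assert (hm1 : exp (-1) = exp (x - 1) * exp (- x))
      by (rewrite <- exp_plus; f_equal; ring).
    pose proof (exp_ineq1_le (x - 1)).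
    pose proof (exp_pos (- b)). pose proof (exp_pos (- x)).
    rewrite he, hm1.
    assert (x * exp (- b) <= exp (x - 1)) by nra.
    assert (x * exp (- b) * exp (- x) <= exp (x - 1) * exp (- x))
      by (apply Rmult_le_compat_r; lra).
    assert (0 < x * exp (- b) * exp (- x))
      by (apply Rmult_lt_0_compat; [apply Rmult_lt_0_compat|]; lra).
    split; nra. }
  destruct HW as [HW1 HW2].
  set (u1 := - Wm / x).
  assert (hWm : Wm = - x * u1) by (unfold u1; field; lra).
  clearbody u1.
  assert (hu1x : 1 <= x * u1) by nra.
  assert (hu1pos : 0 < u1) by nra.
  assert (hinv : / u1 <= x).
  { apply (Rmult_le_reg_r u1); [lra|]. rewrite Rinv_l; lra. }
  assert (hlnu1 : ln u1 = x * (u1 - 1) - b).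
  { rewrite hWm in HW2.
    assert (h1 : u1 * exp (- x * u1) = exp (- b - x)).
    { apply (Rmult_eq_reg_l (- x)); [|lra]. rewrite <- HW2. ring. }
    assert (h2 : u1 = exp (- b - x + x * u1)).
    { rewrite exp_plus, <- h1, Rmult_assoc, <- exp_plus.
      replace (- x * u1 + x * u1) with 0 by ring. rewrite exp_0; ring. }
    transitivity (ln (exp (- b - x + x * u1))). f_equal; exact h2.
    rewrite ln_exp; ring. }
  assert (hu1gt : 1 < u1).
  { destruct (Rlt_le_dec 1 u1) as [h|h]; auto. exfalso.
    pose proof (ln_tan u1 1 hu1pos ltac:(lra)) as ht.
    rewrite ln_1, hlnu1 in ht.
    replace ((1 - u1) / u1) with (/ u1 - 1) in ht by (field; lra).
    assert (u1 * / u1 = 1) by (field; lra). nra. }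
  assert (hlam1 : lam1 = (u1 - 1) / (u1 - 1 + c')).
  { unfold lam1. rewrite hWm. unfold x. field. repeat split; try lra. nra. }
  clearbody lam1.
  assert (HV : -1 <= LambertW0 ((c' - 1) / exp 1) /\
     LambertW0 ((c' - 1) / exp 1) * exp (LambertW0 ((c' - 1) / exp 1)) = (c' - 1) / exp 1).
  { unfold LambertW0. apply epsilon_spec. apply W0_exists.
    replace (exp (-1)) with (/ exp 1) by (rewrite <- exp_Ropp; f_equal; ring).
    pose proof (exp_pos 1).
    assert (0 < / exp 1) by (apply Rinv_0_lt_compat; lra).
    unfold Rdiv. nra. }
  assert (hE : E = exp (LambertW0 ((c' - 1) / exp 1) + 1)) by reflexivity.
  clearbody E.
  set (v := LambertW0 ((c' - 1) / exp 1)) in *.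
  clearbody v.
  destruct HV as [hv1 hv2].
  assert (he1 : 0 < exp 1) by apply exp_pos.
  assert (hEv : E * v = c' - 1).
  { rewrite hE, exp_plus.
    replace (exp v * exp 1 * v) with ((v * exp v) * exp 1) by ring.
    rewrite hv2. field. lra. }
  assert (hv : -1 < v).
  { destruct (Req_dec v (-1)) as [h|h]; [|lra]. exfalso.
    rewrite h in hv2.
    replace (exp (-1)) with (/ exp 1) in hv2 by (rewrite <- exp_Ropp; f_equal; ring).
    assert (- 1 = c' - 1).
    { apply (Rmult_eq_reg_r (/ exp 1)).
      - unfold Rdiv in hv2. lra.
      - apply Rgt_not_eq, Rinv_0_lt_compat; lra. }
    lra. }
  assert (hlnE : ln E = v + 1) by (rewrite hE, ln_exp; ring).
  assert (hE1 : 1 < E) by (rewrite hE; pose proof (exp_ineq1_le (v + 1)); lra).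
  assert (hlam2 : lam2 = (E - 1) / (E - 1 + c')) by (unfold lam2; f_equal; ring).
  clearbody lam2.
  assert (hA : forall w, 1 <= w ->
            b + c' * ln w / (w - 1 + c') <= b + c' * ln E / (E - 1 + c')).
  { intros w hw. apply Rplus_le_compat_l.
    replace (c' * ln E / (E - 1 + c')) with (c' / E).
    2:{ replace (E - 1 + c') with (E * (v + 1)) by nra. rewrite hlnE. field. split; lra. }
    apply div_le_cross; [lra|lra|].
    pose proof (ln_tan E w ltac:(lra) ltac:(lra)) as ht.
    rewrite hlnE in ht.
    assert (hh : (w - E) / E * E = w - E) by (field; lra).
    assert (E * ln w <= E * (v + 1 + (w - E) / E)) by (apply Rmult_le_compat_l; lra).
    nra. }
  assert (hB : E <= u1 -> forall w, u1 <= w ->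
            b + c' * ln w / (w - 1 + c') <= b + c' * ln u1 / (u1 - 1 + c')).
  { intros hEu w hw. apply Rplus_le_compat_l.
    unfold Rdiv. rewrite !Rmult_assoc. apply Rmult_le_compat_l; [lra|].
    fold (Rdiv (ln w) (w - 1 + c')). fold (Rdiv (ln u1) (u1 - 1 + c')).
    apply div_le_cross; [lra|lra|].
    pose proof (ln_tan u1 E ltac:(lra) ltac:(lra)) as t1.
    pose proof (ln_tan u1 w ltac:(lra) ltac:(lra)) as t2.
    assert (hh1 : (E - u1) / u1 * u1 = E - u1) by (field; lra).
    assert (hh2 : (w - u1) / u1 * u1 = w - u1) by (field; lra).
    assert (m1 : u1 * ln E <= u1 * ln u1 + (E - u1)).
    { assert (u1 * ln E <= u1 * (ln u1 + (E - u1) / u1)) by (apply Rmult_le_compat_l; lra).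
      nra. }
    assert (hlnE0 : 0 < ln E) by lra.
    assert (m2 : c' - 1 <= u1 * ln u1 - u1).
    { assert ((E - u1) * ln E <= 0) by nra. nra. }
    assert (m3 : (u1 + c' - 1) * ln w <= (u1 + c' - 1) * (ln u1 + (w - u1) / u1))
      by (apply Rmult_le_compat_l; lra).
    assert (m4 : (u1 + c' - 1) * ((w - u1) / u1) <= ln u1 * (w - u1)).
    { assert (0 <= (w - u1) / u1) by (apply Rmult_le_pos; [lra|left; apply Rinv_0_lt_compat; lra]).
      nra. }
    nra. }
  assert (hCr : forall w, u1 <= w ->
            b + c' * ln w / (w - 1 + c') <= CSR * ((w - 1) / (w - 1 + c'))).
  { intros w hw.
    assert (hl : ln w <= x * (w - 1) - b).
    { pose proof (ln_tan u1 w ltac:(lra) ltac:(lra)) as t2.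
      rewrite hlnu1 in t2.
      replace ((w - u1) / u1) with ((w - u1) * / u1) in t2 by reflexivity.
      assert ((w - u1) * / u1 <= (w - u1) * x) by (apply Rmult_le_compat_l; lra).
      nra. }
    apply Rle_trans with (b + c' * (x * (w - 1) - b) / (w - 1 + c')).
    - apply Rplus_le_compat_l. unfold Rdiv. apply Rmult_le_compat_r.
      + left; apply Rinv_0_lt_compat; lra.
      + apply Rmult_le_compat_l; lra.
    - right. rewrite hC. unfold x. field. lra. }
  assert (hCeq : b + c' * ln u1 / (u1 - 1 + c') = CSR * ((u1 - 1) / (u1 - 1 + c'))).
  { rewrite hlnu1, hC. unfold x. field. lra. }
  assert (hF1 : forall w, 1 <= w <= u1 ->
            CSR * ((w - 1) / (w - 1 + c')) <= CSR * ((u1 - 1) / (u1 - 1 + c'))).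
  { intros w hw. apply Rmult_le_compat_l; [lra|]. apply g_mono; lra. }
  unfold lamstar. rewrite hlam1, hlam2.
  split.
  { unfold Rmax. destruct (Rle_dec _ _); apply lam_in; lra. }
  intros l hl.
  set (u := 1 + c' * l / (1 - l)).
  assert (hu : 1 < u).
  { unfold u. assert (0 < c' * l / (1 - l)) by (apply Rdiv_lt_0_compat; nra). lra. }
  replace (ps_objective CSR b c' l) with (ps_objective CSR b c' ((u - 1) / (u - 1 + c')))
    by (f_equal; symmetry; apply lam_u; lra).
  rewrite obj_u by lra.
  destruct (Rle_lt_dec u1 E) as [hue|hue].
  - rewrite Rmax_right by (apply g_mono; lra).
    rewrite obj_u by lra.
    rewrite (Rmin_right (CSR * ((E - 1) / (E - 1 + c')))) by (apply hCr; lra).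
    apply Rle_trans with (b + c' * ln u / (u - 1 + c')); [apply Rmin_r|].
    apply hA; lra.
  - rewrite Rmax_left by (apply g_mono; lra).
    rewrite obj_u by lra.
    destruct (Rle_lt_dec u u1) as [h|h].
    + apply Rmin_glb.
      * apply Rle_trans with (CSR * ((u - 1) / (u - 1 + c'))); [apply Rmin_l|].
        apply hF1; lra.
      * rewrite hCeq.
        apply Rle_trans with (CSR * ((u - 1) / (u - 1 + c'))); [apply Rmin_l|].
        apply hF1; lra.
    + apply Rmin_glb.
      * rewrite <- hCeq.
        apply Rle_trans with (b + c' * ln u / (u - 1 + c')); [apply Rmin_r|].
        apply hB; lra.
      * apply Rle_trans with (b + c' * ln u / (u - 1 + c')); [apply Rmin_r|].
        apply hB; lra.
Qed.
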